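(* Let $k\ge2$, $\sigma_i=\frac{i(k-i)}2$ for $i=0,\dots,k$, and $j\in\{1,\dots,k\}$. Let $M_k^j$ be the $(k-j+1)\times(k-j+1)$ tridiagonal matrix whose upper-diagonal entries are $(M_k^j)_{m,m+1}=\sigma_m$ ($m=1,\dots,k-j$), whose lower-diagonal entries are $(M_k^j)_{m+1,m}=\sigma_{j+m-1}$ ($m=1,\dots,k-j$), whose diagonal entries are $(M_k^j)_{m,m}=-(\sigma_{m-1}+\sigma_{j+m-1})$ ($m=1,\dots,k-j+1$) (so that each column sums to zero), and whose other entries vanish. Then $M_k^j$ is similar to the diagonal matrix $$\mathrm{diag}\big(0,\,-j,\,-(j+(j+1)),\,-(j+(j+1)+(j+2)),\,\dots,\,-(j+(j+1)+\dots+(k-1))\big).$$ *)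

(* Defs.v *)
From mathcomp Require Import all_boot all_order all_algebra.
Set Implicit Arguments. Unset Strict Implicit. Unset Printing Implicit Defensive.
Import Order.TTheory GRing.Theory Num.Theory.
Local Open Scope ring_scope.

Definition sigma (R : numFieldType) (k i : nat) : R := (i * (k - i))%N%:R / 2%:R.

(* M_k^j, a (k-j+1) x (k-j+1) matrix, indices shifted to 0-based:
   row a, column b (a,b in 0..k-j) correspond to 1-based m = a+1, n = b+1.
   (M)_{a,a+1} = sigma_{a+1},  (M)_{a+1,a} = sigma_{j+a},
   (M)_{a,a}   = -(sigma_a + sigma_{j+a}), 0 elsewhere. *)
Definition Mkj (R : numFieldType) (k j : nat) : 'M[R]_(k - j + 1) :=
  \matrix_(a, b)
    if b == a.+1 :> nat then sigma R k a.+1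
    else if a == b.+1 :> nat then sigma R k (j + b)
    else if a == b :> nat then - (sigma R k a + sigma R k (j + a))
    else 0.

Definition Dkj (R : numFieldType) (k j : nat) : 'M[R]_(k - j + 1) :=
  diag_mx (\row_(a < k - j + 1) - (\sum_(t < a) (j + t)%N%:R : R)).

(* Main.v *)
Require Import Defs.
From mathcomp Require Import all_boot all_order all_algebra.
From mathcomp Require Import ring lra zify.
Set Implicit Arguments. Unset Strict Implicit. Unset Printing Implicit Defensive.
Import Order.TTheory GRing.Theory Num.Theory.
Local Open Scope ring_scope.

Lemma sum_delta (R : numFieldType) N x (F : nat -> R) :
  \sum_(c < N) (if (c : nat) == x then F c else 0) = if (x < N)%N then F x else 0.
Proof. by rewrite -big_mkcond big_ord1_eq. Qed.

Lemma sigmaE (R : numFieldType) k i : (i <= k)%N ->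
  sigma R k i = i%:R * (k%:R - i%:R) / 2.
Proof. by move=> h; rewrite /sigma natrM natrB. Qed.

Definition lam (R : numFieldType) (j d : nat) : R := - \sum_(t < d) (j + t)%N%:R.

Lemma lamS (R : numFieldType) j d : lam R j d.+1 = lam R j d - (j + d)%N%:R.
Proof. by rewrite /lam big_ord_recr /= opprD. Qed.

Lemma lamE (R : numFieldType) j d : lam R j d = - (d%:R * (2 * j%:R + d%:R - 1)) / 2.
Proof.
elim: d => [|d IH]; first by rewrite /lam big_ord0 mul0r oppr0 mul0r.
rewrite lamS IH natrD -addn1 natrD; by field.
Qed.

Lemma lam_lt (R : numFieldType) j t a : (1 <= j)%N -> (t < a)%N -> lam R j a < lam R j t.
Proof.
move=> hj; elim: a => // a IH; rewrite ltnS leq_eqVlt => /orP [/eqP ->|/IH h].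
  by rewrite lamS ltrBlDr ltrDl ltr0n; lia.
by rewrite lamS (lt_trans _ h) // ltrBlDr ltrDl ltr0n; lia.
Qed.


Lemma sigma0 (R : numFieldType) k : sigma R k 0 = 0.
Proof. by rewrite /sigma mul0n mul0r. Qed.
Lemma sigmak (R : numFieldType) k : sigma R k k = 0.
Proof. by rewrite /sigma subnn muln0 mul0r. Qed.

Lemma Mcol (R : numFieldType) k j (f : nat -> R) (b : 'I_(k - j + 1)) : (j <= k)%N ->
  \sum_(c < k - j + 1) f c * Mkj R k j c b =
  f b.-1 * sigma R k b - f b * (sigma R k b + sigma R k (j + b)) + f b.+1 * sigma R k (j + b).
Proof.
move=> hjk.
have E (c : 'I_(k - j + 1)) : f c * Mkj R k j c b =
   (if (c : nat) == b.-1 then (if (0 < b)%N then f c * sigma R k b else 0) else 0)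
 + (if (c : nat) == b.+1 then f c * sigma R k (j + b) else 0)
 + (if (c : nat) == b then - (f c * (sigma R k b + sigma R k (j + b))) else 0).
  rewrite mxE; repeat (case: ifP => /eqP; intro); try (exfalso; lia).
  all: rewrite ?mulr0 ?addr0 ?add0r //.
  - have HH : (b : nat) = c.+1 by lia.
    by rewrite HH.
  - have HH : (c : nat) = b by lia.
    by rewrite HH mulrN.
  - have HH : (c : nat) = b by lia.
    by rewrite HH mulrN.
rewrite (eq_bigr _ (fun c _ => E c)) !big_split /= -!big_mkcond /=.
rewrite (big_ord1_eq _ (fun c => if (0 < b)%N then f c * sigma R k b else 0)).
rewrite (big_ord1_eq _ (fun c => f c * sigma R k (j + b))).
rewrite (big_ord1_eq _ (fun c => - (f c * (sigma R k b + sigma R k (j + b))))).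
have hb := ltn_ord b.
have h1 : (b.-1 < k - j + 1)%N by lia.
rewrite h1 hb.
case: (posnP b) => [b0|bp].
  rewrite b0 sigma0 mulr0 add0r /=.
  case: ifP => hh; first by rewrite sub0r addrC.
  by rewrite (_ : j + 0 = k)%N ?sigmak ?mulr0 ?addr0 //; lia.

case: ifP => h.
  by rewrite addrAC.
rewrite (_ : j + b = k)%N ?sigmak; last by lia.
by rewrite !mulr0 !addr0.
Qed.


Definition Tm (R : numFieldType) k j : 'M[R]_(k - j + 1) :=
  \matrix_(d, e) (if d == e :> nat then lam R j d
                  else if d == e.+1 :> nat then sigma R k (j + e) else 0).

Lemma Trow (R : numFieldType) k j (g : nat -> R) (d : 'I_(k - j + 1)) :
  \sum_(e < k - j + 1) Tm R k j d e * g e =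
  lam R j d * g d + (if (0 < d)%N then sigma R k (j + d.-1) * g d.-1 else 0).
Proof.
have E (e : 'I_(k - j + 1)) : Tm R k j d e * g e =
   (if (e : nat) == d then lam R j d * g e else 0)
 + (if (e : nat) == d.-1 then (if (0 < d)%N then sigma R k (j + d.-1) * g e else 0) else 0).
  rewrite mxE; repeat (case: ifP => /eqP; intro); try (exfalso; lia).
  all: rewrite ?mul0r ?addr0 ?add0r //.
  have HH : d.-1 = e by lia.
  by rewrite HH.
rewrite (eq_bigr _ (fun c _ => E c)) !big_split /= -!big_mkcond /=.
rewrite (big_ord1_eq _ (fun c => lam R j d * g c)).
rewrite (big_ord1_eq _ (fun c => if (0 < d)%N then sigma R k (j + d.-1) * g c else 0)).
have hd := ltn_ord d.
have h1 : (d.-1 < k - j + 1)%N by lia.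
by rewrite h1 hd.
Qed.

Lemma alg (R : numFieldType) (K J B D x z w : R) :
  B * x - (D + 1) * w = 0 -> (B - D) * z - (D + 1) * w = 0 ->
  B * (K - B) / 2 * (w - x) - w * (B * (K - B) / 2 + (J + B) * (K - (J + B)) / 2)
  + (w + z) * ((J + B) * (K - (J + B)) / 2)
  = - ((D + 1) * (2 * J + (D + 1) - 1)) / 2 * w + (J + D) * (K - (J + D)) / 2 * z.
Proof.
move=> H1 H2.
apply/eqP; rewrite -subr_eq0; apply/eqP.
transitivity ((- (K - B) / 2) * (B * x - (D + 1) * w)
   + ((K - 2 * J - B - D) / 2) * ((B - D) * z - (D + 1) * w)).
  by ring.
by rewrite H1 H2 !mulr0 addr0.
Qed.

Lemma key (R : numFieldType) k j d b : (j + b <= k)%N -> (j + d.-1 <= k)%N ->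
  'C(b.-1, d)%:R * sigma R k b - 'C(b, d)%:R * (sigma R k b + sigma R k (j + b))
  + 'C(b.+1, d)%:R * sigma R k (j + b) =
  lam R j d * 'C(b, d)%:R + (if (0 < d)%N then sigma R k (j + d.-1) * 'C(b, d.-1)%:R else 0).
Proof.
move=> hb hd.
move: hd; case: d => [|d] hd.
  by rewrite !bin0 /lam big_ord0 /= oppr0 mul0r addr0 !mul1r opprD addrA subrr sub0r addNr.
rewrite /=.
have [lt|le] := ltnP b d.
  have l1 : (b.-1 < d.+1)%N by lia.
  have l2 : (b.+1 < d.+1)%N by lia.
  have l3 : (b < d.+1)%N by lia.
  by rewrite !bin_small ?mul0r ?mulr0 ?addr0 ?subrr.
have E1 : 'C(b.+1, d.+1) = ('C(b, d.+1) + 'C(b, d))%N by rewrite binS.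
have E2 : sigma R k b * 'C(b.-1, d.+1)%:R = sigma R k b * ('C(b, d.+1)%:R - 'C(b.-1, d)%:R).
  case: b {hb le E1} => [|b]; first by rewrite sigma0 !mul0r.
  by rewrite /= binS natrD addrK.
have H1 : b%:R * 'C(b.-1, d)%:R - d.+1%:R * 'C(b, d.+1)%:R = 0 :> R.
  by rewrite -!natrM mul_bin_diag subrr.
have H2 : (b%:R - d%:R) * 'C(b, d)%:R - d.+1%:R * 'C(b, d.+1)%:R = 0 :> R.
  by rewrite -natrB // -!natrM mul_bin_left subrr.
rewrite E1 natrD (mulrC _ (sigma R k b)) E2.
have s1 : (b <= k)%N by lia.
have s2 : (j + d <= k)%N by [].
rewrite (sigmaE _ s1) (sigmaE _ hb) (sigmaE _ s2) lamE.
rewrite -addn1 !natrD /= in H1 H2 *.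
by apply: alg.
Qed.


Definition Pm (R : numFieldType) k j : 'M[R]_(k - j + 1) := \matrix_(d, c) 'C(c, d)%:R.

Lemma PM (R : numFieldType) k j : (j <= k)%N -> Pm R k j *m Mkj R k j = Tm R k j *m Pm R k j.
Proof.
move=> hjk; apply/matrixP => d b; rewrite !mxE.
transitivity (\sum_(c < k - j + 1) 'C(c, d)%:R * Mkj R k j c b).
  by apply: eq_bigr => c _; rewrite mxE.
rewrite (Mcol (fun c => 'C(c, d)%:R)) //.
transitivity (\sum_(e < k - j + 1) Tm R k j d e * 'C(b, e)%:R); last first.
  by apply: eq_bigr => e _; rewrite [Pm _ _ _ e b]mxE.
rewrite (Trow (fun e => 'C(b, e)%:R)) key //.
- by have := ltn_ord b; lia.
- by have := ltn_ord d; lia.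
Qed.

Lemma Tcol (R : numFieldType) k j (f : nat -> R) (e : 'I_(k - j + 1)) :
  \sum_(d < k - j + 1) f d * Tm R k j d e =
  f e * lam R j e + (if (e.+1 < k - j + 1)%N then f e.+1 * sigma R k (j + e) else 0).
Proof.
have E (d : 'I_(k - j + 1)) : f d * Tm R k j d e =
   (if (d : nat) == e then f d * lam R j e else 0)
 + (if (d : nat) == e.+1 then f d * sigma R k (j + e) else 0).
  rewrite mxE; repeat (case: ifP => /eqP; intro); try (exfalso; lia).
  all: rewrite ?mulr0 ?addr0 ?add0r //.
  have HH : (d : nat) = e by lia.
  by rewrite HH.
rewrite (eq_bigr _ (fun c _ => E c)) !big_split /= -!big_mkcond /=.
rewrite (big_ord1_eq _ (fun c => f c * lam R j e)).
rewrite (big_ord1_eq _ (fun c => f c * sigma R k (j + e))).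
by rewrite ltn_ord.
Qed.

Definition yv (R : numFieldType) k j (a d : nat) : R :=
  if (d <= a)%N then \prod_(d <= t < a) (sigma R k (j + t) / (lam R j a - lam R j t)) else 0.

Definition Ym (R : numFieldType) k j : 'M[R]_(k - j + 1) := \matrix_(a, d) yv R k j a d.

Lemma yvaa (R : numFieldType) k j a : yv R k j a a = 1.
Proof. by rewrite /yv leqnn big_geq. Qed.

Lemma yrec (R : numFieldType) k j (a e : nat) : (1 <= j)%N -> (a < k - j + 1)%N ->
  yv R k j a e * lam R j e + (if (e.+1 < k - j + 1)%N then yv R k j a e.+1 * sigma R k (j + e) else 0)
  = lam R j a * yv R k j a e.
Proof.
move=> hj ha.
have [hgt|hlt|heq] := ltngtP a e.
- have l1 : (e <= a)%N = false by lia.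
  have l2 : (e.+1 <= a)%N = false by lia.
  rewrite /yv l1 l2.
  by rewrite mul0r mulr0 add0r; case: ifP; rewrite ?mul0r.
- have hL : lam R j a - lam R j e != 0.
    by rewrite subr_eq0 lt_eqF // lam_lt.
  rewrite (_ : (e.+1 < k - j + 1)%N); last by lia.
  rewrite {1 3}/yv (ltnW hlt) big_ltn // -/(yv R k j a e.+1).
  rewrite /yv hlt.
  set s := sigma R k (j + e); set y := \prod_(_ <= _ < _) _.
  move: hL; set la := lam R j a; set le := lam R j e => hL.
  by field.
- rewrite heq yvaa /yv (_ : (e.+1 <= e)%N = false); last by lia.
  by rewrite mul1r mulr1; case: ifP; rewrite ?mul0r ?addr0.
Qed.

Lemma YT (R : numFieldType) k j : (1 <= j)%N -> Ym R k j *m Tm R k j = Dkj R k j *m Ym R k j.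
Proof.
move=> hj; apply/matrixP => a e; rewrite /Dkj mul_diag_mx !mxE.
transitivity (\sum_(d < k - j + 1) yv R k j a d * Tm R k j d e).
  by apply: eq_bigr => d _; rewrite mxE.
rewrite (Tcol (yv R k j a)) yrec //.

Qed.

Lemma Yunit (R : numFieldType) k j : Ym R k j \in unitmx.
Proof.
rewrite unitmxE det_trig.
  by rewrite big1 ?unitr1 // => i _; rewrite mxE yvaa.
apply/is_trig_mxP => i l h; rewrite mxE /yv.
by rewrite (_ : (l <= i)%N = false) //; lia.
Qed.

Lemma Punit (R : numFieldType) k j : Pm R k j \in unitmx.
Proof.
rewrite unitmxE -det_tr det_trig.
  by rewrite big1 ?unitr1 // => i _; rewrite !mxE binn.
apply/is_trig_mxP => i l h; rewrite !mxE bin_small //.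
Qed.

Theorem lemmaC1 (R : numFieldType) (k j : nat) :
  (2 <= k)%N -> (1 <= j)%N -> (j <= k)%N ->
  similar_in unitmx (Mkj R k j) (Dkj R k j).
Proof.
move=> hk hj hjk.
have U : Ym R k j *m Pm R k j \in unitmx by rewrite unitmx_mul Yunit Punit.
exists (Ym R k j *m Pm R k j) => //.
apply/similarP => //.
by rewrite -mulmxA PM // mulmxA YT // -mulmxA.
Qed.
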